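(* Let $\Gamma$ be a finitely generated group with a fixed choice of generators $\bar{\epsilon}_1,\dots,\bar{\epsilon}_n$, let $\rho:\Gamma\to SL(2,\mathbb{C})$ be a representation and set $A=(A_1,\dots,A_n)=(\rho(\bar{\epsilon}_1),\dots,\rho(\bar{\epsilon}_n))$. For $1\le j,k,l\le n$ define $\sigma_{jk}(A)=\mathsf{tr}([A_j,A_k])-2$, where $[A_j,A_k]=A_jA_kA_j^{-1}A_k^{-1}$, and $\Delta_{jkl}(A)=(\mathsf{tr}(A_jA_kA_l)-\mathsf{tr}(A_lA_kA_j))^2$. Then $\rho$ is reducible if and only if $\sigma_{jk}(A)=\Delta_{jkl}(A)=0$ for every triple $1\le j,k,l\le n$.
   Context: A representation $\rho:\Gamma\to SL(2,\mathbb{C})$ is reducible if some proper nonzero subspace of $\mathbb{C}^2$ is invariant under $\rho(\Gamma)$. *)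

(* Defs.v *)
From HB Require Import structures.
From mathcomp Require Import all_boot all_order all_algebra.
From mathcomp Require Import reals.
From mathcomp Require Import complex.
Set Implicit Arguments. Unset Strict Implicit. Unset Printing Implicit Defensive.
Import Order.TTheory GRing.Theory Num.Theory.
Local Open Scope ring_scope.

Notation Cplx R := (complex (Real.sort R)).

Record group_laws (G : Type) (mul : G -> G -> G) (inv : G -> G) (e : G) : Prop := {
  gmulA : forall x y z, mul x (mul y z) = mul (mul x y) z;
  gmul1 : forall x, mul e x = x;
  gmulV : forall x, mul (inv x) x = e }.

Inductive generated (G : Type) (mul : G -> G -> G) (inv : G -> G) (e : G)
    (n : nat) (gens : 'I_n -> G) : G -> Prop :=
  | gen_one : generated mul inv e gens e
  | gen_gen : forall i, generated mul inv e gens (gens i)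
  | gen_inv : forall x, generated mul inv e gens x -> generated mul inv e gens (inv x)
  | gen_mul : forall x y, generated mul inv e gens x -> generated mul inv e gens y ->
                generated mul inv e gens (mul x y).

Definition SL2_rep (F : comNzRingType) (G : Type) (mul : G -> G -> G)
    (rho : G -> 'M[F]_2) : Prop :=
  (forall x, \det (rho x) = 1) /\ (forall x y, rho (mul x y) = rho x *m rho y).

Definition subspace (F : fieldType) (W : 'cV[F]_2 -> Prop) : Prop :=
  W 0 /\ (forall v w, W v -> W w -> W (v + w)) /\ (forall (a : F) v, W v -> W (a *: v)).

Definition reducible (F : fieldType) (G : Type) (rho : G -> 'M[F]_2) : Prop :=
  exists W : 'cV[F]_2 -> Prop,
    [/\ subspace W, (exists v, W v /\ v <> 0), (exists v, ~ W v)
      & forall (g : G) v, W v -> W (rho g *m v)].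

Definition mxcomm (F : fieldType) (A B : 'M[F]_2) : 'M[F]_2 :=
  A *m B *m invmx A *m invmx B.

Definition sigma_jk (F : fieldType) (A B : 'M[F]_2) : F := \tr (mxcomm A B) - 2.

Definition Delta_jkl (F : fieldType) (A B C : 'M[F]_2) : F :=
  (\tr (A *m B *m C) - \tr (C *m B *m A)) ^+ 2.

(* Main.v *)
Require Import Defs.
From HB Require Import structures.
From mathcomp Require Import all_boot all_order all_algebra.
From mathcomp Require Import reals complex.
From mathcomp Require Import ring.
Import Order.TTheory GRing.Theory Num.Theory.
Local Open Scope ring_scope.

Section Mx2.
Variable F : fieldType.

Definition mx2 (a b c d : F) : 'M[F]_2 :=
  \matrix_(i < 2, j < 2) (if (i : nat) == 0%N then (if (j : nat) == 0%N then a else b)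
                          else (if (j : nat) == 0%N then c else d)).
Definition cv2 (x y : F) : 'cV[F]_2 := \col_(i < 2) (if (i : nat) == 0%N then x else y).

Lemma ord2P (i : 'I_2) : i = 0 \/ i = 1.
Proof. case: i => [[|[|i]]] Hi; [left|right|]; try (by apply: val_inj). by []. Qed.

Lemma mx2P (M : 'M[F]_2) : exists a b c d, M = mx2 a b c d.
Proof.
exists (M 0 0), (M 0 1), (M 1 0), (M 1 1); apply/matrixP => i j; rewrite mxE.
by case: (ord2P i) => ->; case: (ord2P j) => ->.
Qed.

Lemma cv2P (v : 'cV[F]_2) : exists x y, v = cv2 x y.
Proof.
exists (v 0 0), (v 1 0); apply/matrixP => i j; rewrite mxE (ord1 j).
by case: (ord2P i) => ->.
Qed.

Lemma mx2_mul a b c d a' b' c' d' :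
  mx2 a b c d *m mx2 a' b' c' d' = mx2 (a*a'+b*c') (a*b'+b*d') (c*a'+d*c') (c*b'+d*d').
Proof.
apply/matrixP => i j; rewrite !mxE big_ord_recl big_ord1 !mxE /=.
by case: (ord2P i) => ->; case: (ord2P j) => ->.
Qed.

Lemma mx2_mulv a b c d x y :
  mx2 a b c d *m cv2 x y = cv2 (a*x+b*y) (c*x+d*y).
Proof.
apply/matrixP => i j; rewrite !mxE big_ord_recl big_ord1 !mxE /=.
by case: (ord2P i) => ->.
Qed.

Lemma mx2_add a b c d a' b' c' d' :
  mx2 a b c d + mx2 a' b' c' d' = mx2 (a+a') (b+b') (c+c') (d+d').
Proof. apply/matrixP => i j; rewrite !mxE. by case: (ord2P i) => ->; case: (ord2P j) => ->. Qed.

Lemma mx2_opp a b c d : - mx2 a b c d = mx2 (-a) (-b) (-c) (-d).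
Proof. apply/matrixP => i j; rewrite !mxE. by case: (ord2P i) => ->; case: (ord2P j) => ->. Qed.

Lemma mx2_scale k a b c d : k *: mx2 a b c d = mx2 (k*a) (k*b) (k*c) (k*d).
Proof. apply/matrixP => i j; rewrite !mxE. by case: (ord2P i) => ->; case: (ord2P j) => ->. Qed.

Lemma mx2_scalar k : k%:M = mx2 k 0 0 k.
Proof. apply/matrixP => i j; rewrite !mxE. by case: (ord2P i) => ->; case: (ord2P j) => ->. Qed.

Lemma mx2_0 : 0 = mx2 0 0 0 0.
Proof. apply/matrixP => i j; rewrite !mxE. by case: (ord2P i) => ->; case: (ord2P j) => ->. Qed.

Lemma cv2_0 : 0 = cv2 0 0.
Proof. apply/matrixP => i j; rewrite !mxE. by case: (ord2P i) => ->. Qed.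

Lemma cv2_scale k x y : k *: cv2 x y = cv2 (k*x) (k*y).
Proof. apply/matrixP => i j; rewrite !mxE. by case: (ord2P i) => ->. Qed.

Lemma tr2 a b c d : \tr (mx2 a b c d) = a + d.
Proof. by rewrite /mxtrace big_ord_recl big_ord1 !mxE. Qed.

Lemma det2 a b c d : \det (mx2 a b c d) = a * d - b * c.
Proof.
rewrite (expand_det_row _ 0) big_ord_recl big_ord1 /cofactor !det_mx11 !mxE /=.
rewrite /bump /=. ring.
Qed.

Lemma mx2_eq a b c d a' b' c' d' :
  (mx2 a b c d = mx2 a' b' c' d') <-> [/\ a = a', b = b', c = c' & d = d'].
Proof.
split.
  move/matrixP => H; move: (H 0 0) (H 0 1) (H 1 0) (H 1 1); rewrite !mxE /=.
  by move=> -> -> -> ->.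
by case=> -> -> -> ->.
Qed.

Lemma cv2_eq x y x' y' : (cv2 x y = cv2 x' y') <-> (x = x' /\ y = y').
Proof.
split.
  move/matrixP => H; move: (H 0 0) (H 1 0); rewrite !mxE /=.
  by move=> -> ->.
by case=> -> ->.
Qed.

End Mx2.
Arguments mx2 {F}. Arguments cv2 {F}. Arguments mx2P {F}. Arguments cv2P {F}.

Set Implicit Arguments. Unset Strict Implicit.

Section L.
Variable F : fieldType.
Implicit Types (A B C K P : 'M[F]_2) (v w : 'cV[F]_2).

Definition adj2 A := mx2 (A 1 1) (- A 0 1) (- A 1 0) (A 0 0).

Lemma mx2_entries (a b c d : F) :
  [/\ mx2 a b c d 0 0 = a, mx2 a b c d 0 1 = b, mx2 a b c d 1 0 = c & mx2 a b c d 1 1 = d].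
Proof. by rewrite !mxE. Qed.

Lemma adj2E a b c d : adj2 (mx2 a b c d) = mx2 d (-b) (-c) a.
Proof. by rewrite /adj2 !mxE. Qed.

Lemma invmx2 A : \det A = 1 -> invmx A = adj2 A.
Proof.
move=> hA.
have hu : A \in unitmx by rewrite unitmxE hA unitr1.
have h1 : adj2 A *m A = 1%:M.
  case: (mx2P A) => [a [b [c [d eA]]]]; rewrite eA adj2E mx2_mul mx2_scalar.
  move: hA; rewrite eA det2 => hA.
  apply/mx2_eq; split; rewrite -?hA; ring.
by rewrite -[invmx A]mul1mx -h1 -mulmxA mulmxV // mulmx1.
Qed.

Lemma sigmaE A B : \det A = 1 -> \det B = 1 ->
  sigma_jk A B = - \det (A *m B - B *m A).
Proof.
move=> hA hB; rewrite /sigma_jk /mxcomm !invmx2 //.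
case: (mx2P A) hA => [a [b [c [d ->]]]]; case: (mx2P B) hB => [a' [b' [c' [d' ->]]]].
rewrite !det2 adj2E adj2E !mx2_mul !mx2_opp !mx2_add tr2 det2 => hA hB.
have -> : (2 : F) = 2 * (a * d - b * c) * (a' * d' - b' * c') by rewrite hA hB; ring.
ring.
Qed.

Lemma DeltaE A B C :
  Delta_jkl A B C = (\tr (A *m (B *m C - C *m B))) ^+ 2.
Proof.
rewrite /Delta_jkl.
case: (mx2P A) => [a [b [c [d ->]]]]; case: (mx2P B) => [a' [b' [c' [d' ->]]]].
case: (mx2P C) => [a'' [b'' [c'' [d'' ->]]]].
rewrite !mx2_mul !mx2_opp !mx2_add !mx2_mul !tr2. congr (_ ^+ 2); ring.
Qed.

Definition cross v w := v 0 0 * w 1 0 - v 1 0 * w 0 0.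

Lemma cross_col v w : v != 0 -> cross v w = 0 -> exists c, w = c *: v.
Proof.
case: (cv2P v) => [x [y ->]]; case: (cv2P w) => [x' [y' ->]].
rewrite /cross !mxE /= => nz hc.
have [hx|hx] := eqVneq x 0.
  have hy : y != 0.
    apply: contraNneq nz => hy; rewrite hx hy; exact/eqP/esym/cv2_0.
  exists (y' / y); rewrite cv2_scale; apply/cv2_eq; split.
    move: hc; rewrite hx mul0r sub0r => /eqP; rewrite oppr_eq0 mulf_eq0 (negbTE hy) /=.
    by move/eqP->; rewrite mulr0.
  by rewrite divfK.
exists (x' / x); rewrite cv2_scale; apply/cv2_eq; split; first by rewrite divfK.
apply: (mulfI hx); move/eqP: hc; rewrite subr_eq0 => /eqP ->; field; exact: hx.
Qed.

Lemma colinear K v w : K != 0 -> v != 0 -> K *m v = 0 -> K *m w = 0 ->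
  exists c, w = c *: v.
Proof.
move=> nK nv hv hw; apply: (cross_col nv); move: nK hv hw.
case: (mx2P K) => [a [b [c [d ->]]]]; case: (cv2P v) => [x [y ->]];
  case: (cv2P w) => [x' [y' ->]].
rewrite /cross !mxE /= !mx2_mulv cv2_0 => nK /cv2_eq [h1 h2] /cv2_eq [h3 h4].
have e1 : a * (x * y' - y * x') = - (y * (a * x' + b * y') - y' * (a * x + b * y)) by ring.
have e2 : b * (x * y' - y * x') = (x * (a * x' + b * y') - x' * (a * x + b * y)) by ring.
have e3 : c * (x * y' - y * x') = - (y * (c * x' + d * y') - y' * (c * x + d * y)) by ring.
have e4 : d * (x * y' - y * x') = (x * (c * x' + d * y') - x' * (c * x + d * y)) by ring.
rewrite h1 h2 h3 h4 !mulr0 subrr oppr0 in e1 e2 e3 e4.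
apply/eqP; apply: contraNT nK => hz; rewrite mx2_0; apply/eqP/mx2_eq.
split; apply/eqP.
- by move/eqP: e1; rewrite mulf_eq0 (negbTE hz) orbF.
- by move/eqP: e2; rewrite mulf_eq0 (negbTE hz) orbF.
- by move/eqP: e3; rewrite mulf_eq0 (negbTE hz) orbF.
- by move/eqP: e4; rewrite mulf_eq0 (negbTE hz) orbF.
Qed.

End L.

Section L3.
Variable F : fieldType.
Implicit Types (A B C K P N X Y : 'M[F]_2) (v w : 'cV[F]_2).

Lemma nz_col P : P != 0 -> exists j, col j P != 0.
Proof.
move=> nP; apply/existsP; apply: contraNT nP; rewrite negb_exists => /forallP H.
apply/eqP/matrixP => i j; move/eqP/matrixP: (negbNE (H j)) => /(_ i 0).
by rewrite !mxE.
Qed.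

Lemma L1 n (M : 'I_n -> 'M[F]_2) K P : K != 0 -> P != 0 -> K *m P = 0 ->
  (forall i, K *m M i *m P = 0) ->
  exists v, v != 0 /\ forall i, exists c, M i *m v = c *: v.
Proof.
move=> nK nP hKP hi; have [j hj] := nz_col nP.
exists (col j P); split => // i.
have hv : K *m col j P = 0 by rewrite colE mulmxA hKP mul0mx.
have hw : K *m (M i *m col j P) = 0.
  by rewrite colE !mulmxA hi mul0mx.
have [c ->] := colinear nK hj hv hw; by exists c.
Qed.

Lemma nil2 N : \tr N = 0 -> \det N = 0 -> N *m N = 0.
Proof.
case: (mx2P N) => [a [b [c [d ->]]]]; rewrite tr2 det2 mx2_mul mx2_0 => ht hd.
have hd' : a = - d by apply/eqP; rewrite -subr_eq0 opprK ht.
rewrite hd' in hd *.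
apply/mx2_eq; split.
- have -> : -d * -d + b*c = -(-d*d - b*c) by ring.
  by rewrite hd oppr0.
- ring.
- ring.
- have -> : c * b + d * d = -(-d*d - b*c) by ring.
  by rewrite hd oppr0.
Qed.

Lemma xyx X Y : \det X = 0 -> X *m Y *m X = \tr (X *m Y) *: X.
Proof.
case: (mx2P X) => [a [b [c [d ->]]]]; case: (mx2P Y) => [a' [b' [c' [d' ->]]]].
rewrite det2 !mx2_mul tr2 mx2_scale => hd.
have e : b * c - a * d = 0 by rewrite -opprB hd oppr0.
apply/mx2_eq; split.
- have -> : (a * a' + b * c') * a + (a * b' + b * d') * c
     = (a * a' + b * c' + (c * b' + d * d')) * a + (b * c - a * d) * d' by ring.
  rewrite ?e ?hd; ring.
- have -> : (a * a' + b * c') * b + (a * b' + b * d') * d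
     = (a * a' + b * c' + (c * b' + d * d')) * b + (a * d - b * c) * b' by ring.
  rewrite ?e ?hd; ring.
- have -> : (c * a' + d * c') * a + (c * b' + d * d') * c
     = (a * a' + b * c' + (c * b' + d * d')) * c + (a * d - b * c) * c' by ring.
  rewrite ?e ?hd; ring.
- have -> : (c * a' + d * c') * b + (c * b' + d * d') * d
     = (a * a' + b * c' + (c * b' + d * d')) * d + (b * c - a * d) * a' by ring.
  rewrite ?e ?hd; ring.
Qed.

Lemma eig_form A v a : v != 0 -> A *m v = a *: v ->
  exists u0 u1, A = mx2 (a + u0 * v 1 0) (- (u0 * v 0 0)) (u1 * v 1 0) (a - u1 * v 0 0).
Proof.
case: (cv2P v) => [x [y ->]]; case: (mx2P A) => [p [q [r [s ->]]]].
rewrite !mxE /= mx2_mulv cv2_scale => nv /cv2_eq [h1 h2].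
have [hx|hx] := eqVneq x 0.
  have hy : y != 0.
    apply: contraNneq nv => hy; rewrite hx hy; exact/eqP/esym/cv2_0.
  move: h1 h2; rewrite hx ?mulr0 ?mul0r ?add0r => h1 h2.
  have hq : q = 0 by apply/eqP; move/eqP: h1; rewrite mulf_eq0 (negbTE hy) orbF.
  have hs : s = a by apply: (mulIf hy).
  exists ((p - a) / y), (r / y); apply/mx2_eq; split.
  - by field.
  - by rewrite hq mulr0 oppr0.
  - by field.
  - by rewrite hs mulr0 subr0.
have ep : p = (a * x - q * y) / x by rewrite -h1; field.
have er : r = (a * y - s * y) / x by rewrite -h2; field.
exists (- q / x), ((a - s) / x); apply/mx2_eq; split.
- rewrite ep; field; exact: hx.
- field; exact: hx.
- rewrite er; field; exact: hx.
- field; exact: hx.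
Qed.

End L3.

Lemma common_eig (F : numClosedFieldType) n (M : 'I_n -> 'M[F]_2) :
  (forall j k, \det (M j *m M k - M k *m M j) = 0) ->
  (forall j k l, \tr (M j *m (M k *m M l - M l *m M k)) = 0) ->
  exists v : 'cV[F]_2, v != 0 /\ forall i, exists c, M i *m v = c *: v.
Proof.
move=> Hd Ht.
case: (boolP [exists j, exists k, M j *m M k - M k *m M j != 0]).
  case/existsP => j /existsP [k hN].
  set N := M j *m M k - M k *m M j in hN.
  have hdN : \det N = 0 by exact: Hd.
  apply: (L1 hN hN).
    apply: nil2 => //; rewrite /N.
    case: (mx2P (M j)) => [a [b [c [d ->]]]]; case: (mx2P (M k)) => [a' [b' [c' [d' ->]]]].
    rewrite !mx2_mul mx2_opp mx2_add tr2; ring.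
  move=> i; rewrite xyx // mxtrace_mulC Ht scale0r //.
move/existsPn => Hc.
have comm : forall j k, M j *m M k = M k *m M j.
  move=> j k; move/existsPn: (Hc j) => /(_ k); rewrite negbK subr_eq0 => /eqP //.
case: (boolP [exists p, (M p 0 1 != 0) || (M p 1 0 != 0) || (M p 0 0 != M p 1 1)]).
  case/existsP => p hp.
  have [a [b [c [d eM]]]] := mx2P (M p).
  set D := (a + d) ^+ 2 - 4 * (a * d - b * c).
  set s := sqrtC D.
  have hs0 : s ^+ 2 - D = 0 by apply/eqP; rewrite subr_eq0; apply/eqP; exact: sqrtCK.
  set l := ((a + d) + s) / 2.
  set K := M p - l%:M.
  have eK : K = mx2 (a - l) b c (d - l).
    by rewrite /K eM mx2_scalar mx2_opp mx2_add ?oppr0 ?addr0.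
  have h2 : (2 : F) != 0 by rewrite pnatr_eq0.
  have hdK : (a - l) * (d - l) - b * c = 0.
    have -> : (a - l) * (d - l) - b * c = (s ^+ 2 - D) / 4.
      by rewrite /l /D; field.
    by rewrite hs0 mul0r.
  have nK : K != 0.
    apply/eqP => hK; move: hp; move: hK; rewrite eK mx2_0 => /mx2_eq [h1 h3 h4 h5].
    rewrite eM !mxE /= h3 h4 eqxx /= => /eqP; apply.
    apply/eqP; rewrite -subr_eq0.
    have -> : a - d = (a - l) - (d - l) by ring.
    by rewrite h1 h5 subrr.
  apply: (L1 (K := K) (P := adj2 K)) => //.
  - rewrite eK adj2E; apply: (contraNneq _ nK).
    move/matrixP => H; move: (H 0 0) (H 0 1) (H 1 0) (H 1 1); rewrite !mxE /= => h1 h3 h4 h5.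
    rewrite eK mx2_0; apply/eqP/mx2_eq; split => //.
    + by apply/eqP; rewrite -oppr_eq0; apply/eqP.
    + by apply/eqP; rewrite -oppr_eq0; apply/eqP.
  - rewrite eK adj2E mx2_mul mx2_0; apply/mx2_eq; split; try ring.
    + by rewrite -hdK; ring.
    + by rewrite -hdK; ring.
  - move=> i.
    have -> : K *m M i = M i *m K.
      by rewrite /K mulmxBl mulmxBr comm scalar_mxC.
    rewrite -mulmxA.
    have -> : K *m adj2 K = 0.
      rewrite eK adj2E mx2_mul mx2_0; apply/mx2_eq; split; try ring.
      + by rewrite -hdK; ring.
      + by rewrite -hdK; ring.
    by rewrite mulmx0.
move/existsPn => Hs.
exists (cv2 1 0); split.
  apply/eqP; rewrite cv2_0 => /cv2_eq [h _]; move: h; apply/eqP; exact: oner_neq0.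
move=> i; move: (Hs i); rewrite !negb_or !negbK => /andP [/andP [/eqP h1 /eqP h2] /eqP h3].
exists (M i 0 0).
case: (mx2P (M i)) h1 h2 h3 => [a [b [c [d ->]]]]; rewrite !mxE /= => -> -> ->.
by rewrite mx2_mulv cv2_scale; apply/cv2_eq; split; ring.
Qed.

Lemma cv2_add (F : fieldType) (x y x' y' : F) : cv2 x y + cv2 x' y' = cv2 (x + x') (y + y').
Proof. apply/matrixP => i j; rewrite !mxE. by case: (ord2P i) => ->. Qed.

Lemma decomp (F : fieldType) (v u w : 'cV[F]_2) : cross v u != 0 ->
  w = (cross w u / cross v u) *: v + (cross v w / cross v u) *: u.
Proof.
case: (cv2P v) => [x [y ->]]; case: (cv2P u) => [x' [y' ->]]; case: (cv2P w) => [x'' [y'' ->]].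
rewrite /cross !mxE /= => h; rewrite !cv2_scale cv2_add; apply/cv2_eq; split; field; exact: h.
Qed.

Theorem theorem1p2 (R : realType) (G : Type) (mul : G -> G -> G) (inv : G -> G) (e : G)
  (n : nat) (gens : 'I_n -> G) (rho : G -> 'M[Cplx R]_2) :
  group_laws mul inv e ->
  (forall x : G, generated mul inv e gens x) ->
  SL2_rep mul rho ->
  reducible rho <->
  (forall j k l : 'I_n,
     sigma_jk (rho (gens j)) (rho (gens k)) = 0 /\
     Delta_jkl (rho (gens j)) (rho (gens k)) (rho (gens l)) = 0).
Proof.
move=> GL Hgen [Hdet Hmul].
have rho_e : rho e = 1%:M.
  have h : rho e = rho e *m rho e by rewrite -Hmul (gmul1 GL).
  have hu : rho e \in unitmx by rewrite unitmxE Hdet unitr1.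
  have := congr1 (mulmx (invmx (rho e))) h.
  by rewrite mulmxA mulVmx // mul1mx => ->.
split.
  move=> [W [[W0 [WD WZ]] [v [Wv nv]] [w nw] Hinv]] j k l.
  have nv' : v != 0 by exact/eqP.
  have line : forall u, W u -> exists c, u = c *: v.
    move=> u Wu; apply: (cross_col nv').
    apply/eqP; apply: contraT => hc; exfalso; apply: nw.
    rewrite (decomp w hc); apply: WD; exact: WZ.
  have eig : forall i, exists c, rho (gens i) *m v = c *: v.
    move=> i; exact: line _ (Hinv (gens i) v Wv).
  have [a ha] := eig j; have [b hb] := eig k; have [c hc] := eig l.
  have [u0 [u1 eA]] := eig_form nv' ha.
  have [u0' [u1' eB]] := eig_form nv' hb.
  have [u0'' [u1'' eC]] := eig_form nv' hc.
  split.
    rewrite sigmaE ?Hdet // eA eB !mx2_mul mx2_opp mx2_add det2.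
    apply/eqP; rewrite oppr_eq0; apply/eqP; ring.
  rewrite DeltaE eA eB eC !mx2_mul mx2_opp mx2_add mx2_mul tr2.
  apply/eqP; rewrite expf_eq0 /=; apply/eqP; ring.
move=> H.
have Hd' : forall j k, \det (rho (gens j) *m rho (gens k) - rho (gens k) *m rho (gens j)) = 0.
  move=> j k; have [h _] := H j k j; move: h; rewrite sigmaE ?Hdet // => /eqP.
  by rewrite oppr_eq0 => /eqP.
have Ht' : forall j k l, \tr (rho (gens j) *m (rho (gens k) *m rho (gens l)
     - rho (gens l) *m rho (gens k))) = 0.
  move=> j k l; have [_ h] := H j k l; move: h; rewrite DeltaE => /eqP.
  by rewrite expf_eq0 /= => /eqP.
have [v [nv hv]] := @common_eig _ n (fun i => rho (gens i)) Hd' Ht'.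
have inv_ok : forall x, exists c, rho x *m v = c *: v.
  move=> x; elim: (Hgen x) => [|i|y _ [c hc]|y z _ [c1 h1] _ [c2 h2]].
  - by exists 1; rewrite rho_e mul1mx scale1r.
  - exact: hv.
  - have hi : rho (inv y) *m rho y = 1%:M by rewrite -Hmul (gmulV GL) rho_e.
    have hc0 : c != 0.
      apply: contraNneq nv => c0.
      have := congr1 (mulmx (rho (inv y))) hc.
      by rewrite mulmxA hi mul1mx c0 scale0r mulmx0 => ->.
    exists c^-1.
    have := congr1 (mulmx (rho (inv y))) hc.
    rewrite mulmxA hi mul1mx -scalemxAr => hv'.
    by rewrite {2}hv' scalerA mulVf // scale1r.
  - exists (c2 * c1); rewrite Hmul -mulmxA h2 -scalemxAr h1 scalerA //.
exists (fun u => exists a, u = a *: v); split.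
- split; first by exists 0; rewrite scale0r.
  split.
    by move=> u w [a ->] [b ->]; exists (a + b); rewrite scalerDl.
  by move=> a u [b ->]; exists (a * b); rewrite scalerA.
- by exists v; split; [exists 1; rewrite scale1r | exact/eqP].
- case: (cv2P v) nv => [x [y ->]] nv.
  exists (if x == 0 then cv2 1 0 else cv2 0 1) => -[a].
  rewrite cv2_scale; case: eqP => hx /cv2_eq [h1 h2].
    by move: h1; rewrite hx mulr0 => /eqP; rewrite oner_eq0.
  have ha : a = 0.
    by apply/eqP; move/eqP: h1; rewrite eq_sym mulf_eq0 (negbTE (introN eqP hx)) orbF.
  by move: h2; rewrite ha mul0r => /eqP; rewrite oner_eq0.
- move=> g u [a ->]; have [c hc] := inv_ok g.
  by exists (a * c); rewrite -scalemxAr hc scalerA.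
Qed.
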